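(* Let $N\ge1$ and $\varphi,\psi\in\mathbb{C}^N$ be such that for $k=0,\ldots,2N-2$, $$\Big|P_\varphi\Big(\tfrac{k}{2N-1}\Big)\Big|=\Big|P_\psi\Big(\tfrac{k}{2N-1}\Big)\Big|\quad\text{and}\quad\Big|P_\varphi'\Big(\tfrac{k}{2N-1}\Big)\Big|=\Big|P_\psi'\Big(\tfrac{k}{2N-1}\Big)\Big|.$$ Then there exists $\lambda\in\mathbb{C}$ with $|\lambda|=1$ such that $\psi=\lambda\varphi$.
   Context: For $\psi=(\psi_0,\ldots,\psi_{N-1})\in\mathbb{C}^N$, $P_\psi(x)=\sum_{j=0}^{N-1}\psi_je^{2i\pi jx}$ for $x\in\mathbb{R}$, and $P_\psi'$ denotes its derivative in $x$. *)

(* Defs.v *)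
From Stdlib Require Import Reals Lra.
From Coquelicot Require Import Coquelicot.
Open Scope R_scope.

Definition cexp_i (t : R) : C := (cos t, sin t).

Fixpoint Psum (n : nat) (psi : nat -> C) (x : R) : C :=
  match n with
  | O => 0%C
  | S m => (Psum m psi x + psi m * cexp_i (2 * PI * INR m * x))%C
  end.

Definition P (N : nat) (psi : nat -> C) (x : R) : C := Psum N psi x.

Definition Pderiv (N : nat) (psi : nat -> C) (x : R) : C :=
  (Derive (fun t => Re (P N psi t)) x, Derive (fun t => Im (P N psi t)) x).

(* Main.v *)
Require Import Defs.
From Stdlib Require Import Reals Lra.
From Coquelicot Require Import Coquelicot.
From mathcomp Require Import all_boot all_order all_algebra.
From mathcomp Require Import Rstruct complex.
Import GRing.Theory Num.Theory.

Local Open Scope R_scope.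

Fixpoint dPsum (n : nat) (psi : nat -> C) (x : R) : C :=
  match n with
  | O => RtoC 0
  | S m => Cplus (dPsum m psi x) (Cmult (psi m) (Cmult (0, 2 * PI * INR m) (cexp_i (2 * PI * INR m * x))))
  end.

Lemma dPsum_re n psi x : is_derive (fun t => (Psum n psi t).1) x (dPsum n psi x).1.
Proof.
elim: n => [|n IH] /=; first by apply: is_derive_const.
apply: is_derive_plus; first exact: IH.
set c := (2 * PI * INR n).
apply: (is_derive_ext (fun t => (psi n).1 * cos (c * t) - (psi n).2 * sin (c * t))).
  by move=> t; rewrite /cexp_i /= /c.
rewrite /cexp_i /= -/c.
auto_derive; first done. ring.
Qed.

Lemma dPsum_im n psi x : is_derive (fun t => (Psum n psi t).2) x (dPsum n psi x).2.
Proof.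
elim: n => [|n IH] /=; first by apply: is_derive_const.
apply: is_derive_plus; first exact: IH.
set c := (2 * PI * INR n).
apply: (is_derive_ext (fun t => (psi n).1 * sin (c * t) + (psi n).2 * cos (c * t))).
  by move=> t; rewrite /cexp_i /= /c.
rewrite /cexp_i /= -/c.
auto_derive; first done. ring.
Qed.


Definition ang (x : R) := 2 * PI * x.

Lemma ang_n n x : INR n * ang x = 2 * PI * INR n * x.
Proof. rewrite /ang; ring. Qed.

Lemma cos_lt1 (t : R) : 0 < t < 2 * PI -> cos t < 1.
Proof.
move=> [h1 h2].
have -> : t = 2 * (t / 2) by field.
rewrite cos_2a_sin.
have : 0 < sin (t / 2) by apply: sin_gt_0; lra.
nra.
Qed.

Lemma angle_inj (M k l : nat) : (0 < M)%coq_nat -> (k < M)%coq_nat -> (l < M)%coq_nat ->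
  cos (2 * PI * (INR k / INR M)) = cos (2 * PI * (INR l / INR M)) ->
  sin (2 * PI * (INR k / INR M)) = sin (2 * PI * (INR l / INR M)) -> k = l.
Proof.
move=> hM hk hl hc hs.
have hM' : 0 < INR M by apply: lt_0_INR.
have key : forall u v : nat, (u < v)%coq_nat -> (v < M)%coq_nat ->
    cos (2 * PI * (INR u / INR M)) = cos (2 * PI * (INR v / INR M)) ->
    sin (2 * PI * (INR u / INR M)) = sin (2 * PI * (INR v / INR M)) -> False.
  move=> u v huv hv hc' hs'.
  have h1 : cos (2 * PI * (INR v / INR M) - 2 * PI * (INR u / INR M)) = 1.
    rewrite cos_minus -hc' -hs'.
    have := sin2_cos2 (2 * PI * (INR u / INR M)); rewrite /Rsqr; lra.
  have hu : INR u < INR v by apply: lt_INR.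
  have hv' : INR v < INR M by apply: lt_INR.
  have hu0 : 0 <= INR u by apply: pos_INR.
  have hpi := PI_RGT_0.
  have : cos (2 * PI * (INR v / INR M) - 2 * PI * (INR u / INR M)) < 1.
    apply: cos_lt1; split.
      have : INR u / INR M < INR v / INR M by apply: Rmult_lt_compat_r; [apply: Rinv_0_lt_compat|].
      nra.
    have : INR v / INR M < 1.
      by apply: (Rmult_lt_reg_r (INR M)) => //; rewrite /Rdiv Rmult_assoc Rinv_l; lra.
    have : 0 <= INR u / INR M by apply: Rdiv_le_0_compat.
    nra.
  lra.
case: (Nat.lt_trichotomy k l) => [h|[h|h]] //.
  by case: (key k l h hl hc hs).
by case: (key l k h hk (esym hc) (esym hs)).
Qed.

Lemma Pderiv_dPsum N psi x : Pderiv N psi x = dPsum N psi x.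
Proof.
rewrite /Pderiv; case E: (dPsum N psi x) => [a b].
rewrite (is_derive_unique _ _ _ (dPsum_re N psi x)) (is_derive_unique _ _ _ (dPsum_im N psi x)) E //.
Qed.

From mathcomp Require Import ring lra.
Local Open Scope ring_scope.
Local Notation F := (R[i]).

Definition c2F (z : C) : F := (z.1 +i* z.2)%C.

Lemma c2F_add a b : c2F (Cplus a b) = c2F a + c2F b.
Proof. by case: a => a1 a2; case: b => b1 b2. Qed.

Lemma c2F_mul a b : c2F (Cmult a b) = c2F a * c2F b.
Proof. case: a => a1 a2; case: b => b1 b2; rewrite /c2F /=.
apply/eqP; rewrite eq_complex /= !RealsE; apply/andP; split; apply/eqP; ring. Qed.

Lemma c2F_inj a b : c2F a = c2F b -> a = b.
Proof. case: a => a1 a2; case: b => b1 b2; rewrite /c2F /=. by case=> -> ->. Qed.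

Lemma c2F_norm z : c2F z * (c2F z)^* = ((z.1 ^+ 2 + z.2 ^+ 2) +i* 0)%C.
Proof. case: z => a b; rewrite /c2F /=. apply/eqP; rewrite eq_complex /=; apply/andP; split; apply/eqP; ring. Qed.

Lemma Cmod_c2F z w : Cmod z = Cmod w -> c2F z * (c2F z)^* = c2F w * (c2F w)^*.
Proof.
rewrite /Cmod !c2F_norm => H.
have: (sqrt (z.1 ^ 2 + z.2 ^ 2))^+2 = (sqrt (w.1 ^ 2 + w.2 ^ 2))^+2 by rewrite H.
rewrite -!RpowE !pow2_sqrt; first by move=> HH; rewrite RplusE in HH; rewrite HH.
all: apply: Rplus_le_le_0_compat; apply: pow2_ge_0.
Qed.

Definition zeta (x : R) : F := (cos (ang x) +i* sin (ang x))%C.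

Lemma cexp_pow t m : (cos t +i* sin t)%C ^+ m = (cos (INR m * t) +i* sin (INR m * t))%C :> F.
Proof.
elim: m => [|m IH].
  rewrite expr0 /= Rmult_0_l cos_0 sin_0; by [].
rewrite exprS IH S_INR Rmult_plus_distr_r Rmult_1_l cos_plus sin_plus.
apply/eqP; rewrite eq_complex /= !RealsE; apply/andP; split; apply/eqP; ring.
Qed.

Lemma P_horner n psi x : c2F (Psum n psi x) = (\poly_(j < n) c2F (psi j)).[zeta x].
Proof.
rewrite horner_poly; elim: n => [|n IH]; first by rewrite big_ord0.
rewrite big_ord_recr /= c2F_add c2F_mul IH; congr (_ + _ * _).
rewrite /zeta cexp_pow /cexp_i /c2F /=.
by rewrite ang_n.
Qed.

Lemma natrF n : (n%:R : F) = (n%:R +i* 0)%C.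
Proof. elim: n => [|n IH]; first by []. rewrite -addn1 natrD IH; apply/eqP; rewrite eq_complex /= natrD addr0 !eqxx. by []. Qed.

Lemma dP_horner n psi x : c2F (dPsum n psi x) =
  (0 +i* (2 * PI))%C * (\poly_(j < n) (j%:R * c2F (psi j))).[zeta x].
Proof.
rewrite horner_poly; elim: n => [|n IH]; first by rewrite big_ord0 mulr0.
rewrite big_ord_recr /= c2F_add c2F_mul IH mulrDr; congr (_ + _).
rewrite c2F_mul /zeta cexp_pow /cexp_i /c2F /= natrF.
rewrite ang_n.
apply/eqP; rewrite eq_complex /= !RealsE /=; apply/andP; split; apply/eqP; ring.
Qed.

From mathcomp Require Import zify.
Section Alg.
Variable Fc : numClosedFieldType.

Definition pol (N : nat) (a : nat -> Fc) : {poly Fc} := \poly_(j < N) a j.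
Definition rvp (N : nat) (a : nat -> Fc) : {poly Fc} := \poly_(j < N) (a (N.-1 - j)%N)^*.
Definition wt (a : nat -> Fc) := fun j : nat => j%:R * a j.
Definition Dp (f : {poly Fc}) := 'X * f^`().

Lemma coefDp f j : (Dp f)`_j = j%:R * f`_j.
Proof. rewrite /Dp coefXM; case: j => [|j] /=; first by rewrite mul0r. by rewrite coef_deriv mulr_natl. Qed.

Lemma DpM f g : Dp (f * g) = Dp f * g + f * Dp g.
Proof. rewrite /Dp derivM; ring. Qed.

Lemma polq N a : pol N (wt a) = Dp (pol N a).
Proof. apply/polyP => i; rewrite coefDp !coef_poly /wt; case: ifP => _ //; by rewrite mulr0. Qed.

Lemma rvq N a : rvp N (wt a) = (N.-1)%:R%:P * rvp N a - Dp (rvp N a).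
Proof.
apply/polyP => i; rewrite coefB coefCM coefDp !coef_poly /wt.
case: ifP => Hi; last by rewrite !mulr0 subr0.
rewrite rmorphM rmorph_nat natrB; last by lia.
by rewrite mulrBl.
Qed.

Lemma rvp_horner N a z : z * z^* = 1 ->
  (rvp N a).[z] = z ^+ N.-1 * ((pol N a).[z])^*.
Proof.
move=> hz; rewrite !horner_poly rmorph_sum mulr_sumr.
rewrite (reindex_inj rev_ord_inj) /=.
apply: eq_bigr => i _.
rewrite rmorphM rmorphXn.
have Hi := ltn_ord i.
have -> : (N.-1 - (N - i.+1))%N = i by lia.
have -> : N.-1 = ((N - i.+1) + i)%N by lia.
rewrite exprD.
have h1 : z ^+ i * z^* ^+ i = 1 by rewrite -exprMn hz expr1n.
transitivity ((a i)^* * z ^+ (N - i.+1) * (z ^+ i * z^* ^+ i)); first by rewrite h1 mulr1.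
rewrite /=; ring.
Qed.

Lemma pol0 {N a} : pol N a = 0 -> forall j, (j < N)%N -> a j = 0.
Proof. move=> h j hj; have := congr1 (fun u : {poly Fc} => u`_j) h; by rewrite /= coef_poly hj coef0. Qed.

Lemma rvp0 {N a} : rvp N a = 0 -> forall j, (j < N)%N -> a j = 0.
Proof.
move=> h j hj; have := congr1 (fun u : {poly Fc} => u`_(N.-1 - j)%N) h.
rewrite /= coef_poly coef0.
have -> : (N.-1 - j < N)%N by lia.
have -> : (N.-1 - (N.-1 - j))%N = j by lia.
by move/eqP; rewrite conjC_eq0 => /eqP.
Qed.

Lemma pol_eq0 {N a} : (forall j, (j < N)%N -> a j = 0) -> pol N a = 0.
Proof. move=> h; apply/polyP => i; rewrite coef_poly coef0; case: ifP => // /h //. Qed.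

Lemma topM (f g : {poly Fc}) : f != 0 -> g != 0 ->
  (f * g)`_((size f).-1 + (size g).-1) = lead_coef f * lead_coef g.
Proof.
move=> hf hg; rewrite -lead_coefM /lead_coef size_mul //.
move: hf hg; rewrite -!size_poly_gt0 => hf hg.
by have -> : ((size f + size g).-1.-1 = (size f).-1 + (size g).-1)%N by lia.
Qed.

Lemma topD (f g : {poly Fc}) : f != 0 -> g != 0 ->
  (Dp f * g)`_((size f).-1 + (size g).-1) = (size f).-1%:R * (lead_coef f * lead_coef g).
Proof.
move=> hf hg; set nf := (size f).-1.
have -> : (Dp f * g = (nf%:R : Fc)%:P * (f * g) + (Dp f - (nf%:R : Fc)%:P * f) * g)%R by ring.
rewrite coefD coefCM topM // nth_default ?addr0 //.
apply: leq_trans (size_polyMleq _ _) _.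
have : (size (Dp f - (nf%:R : Fc)%:P * f)%R <= nf)%N.
  apply/leq_sizeP => j hj; rewrite coefB coefCM coefDp.
  case: (ltngtP j nf) => hjn; first by lia.
    rewrite nth_default ?mulr0 ?subr0 //. rewrite /nf in hjn. clear -hjn. by case: (size f) hjn => [|m] /= hjn; lia.
  by rewrite hjn subrr.
move: hg; rewrite -size_poly_gt0; lia.
Qed.

Lemma WR {p r : {poly Fc}} : p != 0 -> r != 0 -> Dp p * r = Dp r * p -> size r = size p.
Proof.
move=> hp hr E.
have := congr1 (fun u : {poly Fc} => u`_((size p).-1 + (size r).-1)) E.
rewrite /= topD // addnC topD // [lead_coef r * _]mulrC.
move/eqP; rewrite -subr_eq0 -mulrBl mulf_eq0 mulf_eq0 !lead_coef_eq0 (negPf hp) (negPf hr) !orbF.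
rewrite subr_eq0 eqr_nat => /eqP h.
move: hp hr; rewrite -!size_poly_gt0 => hp hr. by rewrite -(prednK hp) -(prednK hr) h.
Qed.


Lemma Dp_lin (P p : {poly Fc}) c : Dp (P - c%:P * p) = Dp P - c%:P * Dp p.
Proof. rewrite /Dp derivB derivM derivC mul0r add0r; ring. Qed.

Lemma nz_wt {j} {x : Fc} : (0 < j)%N -> j%:R * x = 0 -> x = 0.
Proof. move=> hj /eqP; rewrite mulf_eq0 pnatr_eq0 => /orP [/eqP h|/eqP //]; lia. Qed.

Theorem alg N a b : (0 < N)%N ->
  pol N a * rvp N a = pol N b * rvp N b ->
  pol N (wt a) * rvp N (wt a) = pol N (wt b) * rvp N (wt b) ->
  exists c, c * c^* = 1 /\ forall j, (j < N)%N -> b j = c * a j.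
Proof.
move=> hN hS hT0.
have hT := hT0; rewrite !polq !rvq in hT.
move: hS hT.
set p := pol N a; set p' := rvp N a; set P := pol N b; set P' := rvp N b.
set k := ((N.-1)%:R : Fc)%:P => hS hT.
case: (eqVneq p 0) => hp.
  have ha := pol0 hp.
  have : P * P' = 0 by rewrite -hS hp mul0r.
  move/eqP; rewrite mulf_eq0 => /orP [/eqP hP|/eqP hP].
    have hb := pol0 hP.
    exists 1; split; first by rewrite conjC1 mulr1.
    by move=> j hj; rewrite hb // ha // mulr0.
  have hb := rvp0 hP.
  exists 1; split; first by rewrite conjC1 mulr1.
  by move=> j hj; rewrite hb // ha // mulr0.
have hp' : p' != 0.
  apply/eqP => h; move/eqP: hp; apply; apply: pol_eq0; exact: rvp0 h.
have hS0 : p * p' != 0 by rewrite mulf_neq0.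
have hP : P != 0 by move: hS0; rewrite hS mulf_eq0 negb_or => /andP [].
have hP' : P' != 0 by move: hS0; rewrite hS mulf_eq0 negb_or => /andP [].
suff [c hc] : exists c, forall j, (j < N)%N -> b j = c * a j.
  exists c; split => //.
  have eP : P = c%:P * p.
    apply/polyP => i; rewrite coefCM !coef_poly; case: ifP => hi; [exact: hc | by rewrite mulr0].
  have eP' : P' = (c^*)%:P * p'.
    apply/polyP=> i; rewrite coefCM !coef_poly; case: ifP => hi; last by rewrite mulr0.
    rewrite hc ?rmorphM //; lia.
  have e : (c * c^* - 1)%:P * (p * p') = P * P' - p * p'.
    rewrite eP eP' polyCB polyCM; ring.
  move: e; rewrite hS subrr => /eqP; rewrite mulf_eq0 -hS (negPf hS0) orbF polyC_eq0 subr_eq0.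
  by move/eqP.
have hUV : Dp p * p' - p * (k * p' - Dp p') = Dp P * P' - P * (k * P' - Dp P').
  have e1 : Dp p * p' - p * (k * p' - Dp p') = Dp (p * p') - k * (p * p') by rewrite DpM; ring.
  have e2 : Dp P * P' - P * (k * P' - Dp P') = Dp (P * P') - k * (P * P') by rewrite DpM; ring.
  by rewrite e1 e2 hS.
have hm : (Dp p * p') * (p * (k * p' - Dp p')) = (Dp P * P') * (P * (k * P' - Dp P')).
  transitivity ((p * p') * (Dp p * (k * p' - Dp p'))); first ring.
  rewrite hS hT; ring.
have : (Dp p * p' - Dp P * P') * (Dp P * P' + p * (k * p' - Dp p')) = 0.
  have eVA : p * (k * p' - Dp p') = Dp p * p' - (Dp P * P' - P * (k * P' - Dp P')).
    rewrite -hUV; ring.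
  transitivity ((Dp p * p') * (p * (k * p' - Dp p')) - (Dp P * P') * (P * (k * P' - Dp P'))).
    rewrite eVA; ring.
  by rewrite hm subrr.
move/eqP; rewrite mulf_eq0 => /orP [/eqP hA|/eqP hB].
  have W : Dp p * P = Dp P * p.
    have : p' * (Dp p * P - Dp P * p) = 0.
      transitivity ((Dp p * p') * P - Dp P * (p * p')); first ring.
      move/eqP: hA; rewrite subr_eq0 => /eqP ->; rewrite hS; ring.
    by move/eqP; rewrite mulf_eq0 (negPf hp') /= subr_eq0 => /eqP.
  have hsz := WR hp hP W.
  have hlp : lead_coef p != 0 by rewrite lead_coef_eq0.
  set c := lead_coef P / lead_coef p.
  have Wr : Dp p * (P - c%:P * p) = Dp (P - c%:P * p) * p.
    rewrite Dp_lin mulrBr mulrBl W; ring.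
  have hr : P - c%:P * p = 0.
    apply/eqP; apply/negPn/negP => hr0.
    have := WR hp hr0 Wr.
    suff : (size (P - c%:P * p)%R <= (size p).-1)%N.
      move=> h1 h2; move: h1; rewrite h2.
      move: hp; rewrite -size_poly_gt0; case: (size p) => //= m _; by rewrite ltnn.
    apply/leq_sizeP => j hj; rewrite coefB coefCM.
    case: (ltngtP j (size p).-1) => hjn; first by lia.
      rewrite !nth_default ?mulr0 ?subr0 //; first by move: hjn; case: (size p) => //= *; lia.
      by rewrite hsz; move: hjn; case: (size p) => //= *; lia.
    rewrite hjn.
    have -> : P`_(size p).-1 = lead_coef P by rewrite /lead_coef hsz.
    by rewrite -/(lead_coef p) /c divfK // subrr.
  exists c => j hj.
  move/eqP: hr; rewrite subr_eq0 => /eqP hr.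
  have := congr1 (fun u : {poly Fc} => u`_j) hr.
  by rewrite /= coefCM !coef_poly hj.
have E : Dp P * p' + (k * p' - Dp p') * P = 0.
  have : p * (Dp P * p' + (k * p' - Dp p') * P) = 0.
    transitivity (Dp P * (p * p') + p * (k * p' - Dp p') * P); first ring.
    rewrite hS.
    transitivity ((Dp P * P' + p * (k * p' - Dp p')) * P); first ring.
    by rewrite hB mul0r.
  by move/eqP; rewrite mulf_eq0 (negPf hp) /= => /eqP.
have hsp' : ((size p').-1 <= N.-1)%N.
  have := size_poly N (fun j => (a (N.-1 - j)%N)^*); rewrite -/(rvp N a) -/p'.
  case: (size p') => //= m; lia.
have hnP : (size P).-1 = 0%N.
  have := congr1 (fun u : {poly Fc} => u`_((size P).-1 + (size p').-1)) E.
  have t1 : (Dp P * p')`_((size P).-1 + (size p').-1) = (size P).-1%:R * (lead_coef P * lead_coef p') by rewrite topD.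
  have t2 : (k * p' * P)`_((size P).-1 + (size p').-1) = (N.-1)%:R * (lead_coef P * lead_coef p').
    by rewrite /k -mulrA coefCM addnC topM // [lead_coef p' * _]mulrC.
  have t3 : (Dp p' * P)`_((size P).-1 + (size p').-1) = (size p').-1%:R * (lead_coef P * lead_coef p').
    by rewrite addnC topD // [lead_coef p' * _]mulrC.
  rewrite /= coef0 coefD mulrBl coefB t1 t2 t3 -mulrBl -mulrDl.
  move/eqP; rewrite mulf_eq0 mulf_eq0 !lead_coef_eq0 (negPf hP) (negPf hp') !orbF.
  by rewrite -natrB // -natrD pnatr_eq0 addn_eq0 => /andP [/eqP].
have hQ : Dp P = 0.
  have hs : (size P <= 1)%N by move: hnP; case: (size P) => //= m ->.
  rewrite (size1_polyC hs) /Dp derivC mulr0 //.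
have hQ' : pol N (wt b) = 0 by rewrite polq.
have hbw : forall j, (j < N)%N -> j%:R * b j = 0.
  move=> j hj; exact: (pol0 hQ' j hj).
have haw : forall j, (j < N)%N -> j%:R * a j = 0.
  move: hT0; rewrite hQ' mul0r => /eqP; rewrite mulf_eq0 => /orP [/eqP h|/eqP h].
    move=> j hj; exact: (pol0 h j hj).
  move=> j hj; exact: (rvp0 h j hj).
have ha0 : a 0%N != 0.
  apply/negP => /eqP h0; move/negP: hp; apply; apply/eqP.
  apply: pol_eq0 => j hj.
  case: j hj => [|j] hj; first exact: h0.
  exact: (nz_wt (ltn0Sn j) (haw j.+1 hj)).
exists (b 0%N / a 0%N) => j hj.
case: j hj => [|j] hj; first by rewrite divfK.
rewrite (nz_wt (ltn0Sn j) (haw j.+1 hj)) (nz_wt (ltn0Sn j) (hbw j.+1 hj)) mulr0 //.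
Qed.

End Alg.
Arguments pol {Fc}.
Arguments rvp {Fc}.
Arguments wt {Fc}.

Lemma zeta_norm x : zeta x * (zeta x)^* = 1.
Proof.
have h := sin2_cos2 (ang x); rewrite /Rsqr !RealsE in h.
apply/eqP; rewrite eq_complex /=; apply/andP; split; apply/eqP.
  by rewrite -h; ring.
ring.
Qed.

Lemma eq_by_pts (f g : {poly F}) (M : nat) : (0 < M)%N -> (size f <= M)%N -> (size g <= M)%N ->
  (forall k, (k < M)%N -> f.[zeta (Rdiv (INR k) (INR M))] = g.[zeta (Rdiv (INR k) (INR M))]) -> f = g.
Proof.
move=> hM hf hg H; apply/eqP; rewrite -subr_eq0; apply/negPn/negP => hne.
have := @max_poly_roots _ (f - g) [seq zeta (Rdiv (INR k) (INR M)) | k <- iota 0 M] hne.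
have hsz : (size (f - g)%R <= M)%N.
  apply/leq_sizeP => j hj; rewrite coefB !nth_default ?subrr //.
    exact: leq_trans hg hj.
  exact: leq_trans hf hj.
rewrite size_map size_iota => h.
have : (M < size (f - g)%R)%N.
  apply: h.
    apply/allP => z /mapP [k]; rewrite mem_iota add0n => /andP [_ hk] ->.
    by rewrite /root hornerD hornerN (H k hk) subrr.
  rewrite map_inj_in_uniq ?iota_uniq // => k l; rewrite !mem_iota !add0n => /andP[_ hk] /andP[_ hl].
  rewrite /zeta => -[hc hs].
  apply: (@angle_inj M k l) => //; by apply/ltP.
lia.
Qed.

Lemma c2F_surj (c : F) : c2F (complex.Re c, complex.Im c) = c.
Proof. by case: c. Qed.

Lemma w_neq0 : (0 +i* (2 * PI))%C != 0 :> F.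
Proof.
apply/negP => /eqP /(congr1 (@complex.Im _)) /= /eqP; rewrite mulf_eq0 pnatr_eq0 /= => /eqP h.
have := PI_RGT_0; rewrite h; exact: Rlt_irrefl.
Qed.

Local Close Scope ring_scope.
Local Open Scope R_scope.

Theorem mainTheorem9 (N : nat) (phi psi : nat -> C) :
  (1 <= N)%coq_nat ->
  (forall k : nat, (k <= Nat.sub (Nat.mul 2 N) 2)%coq_nat ->
     Cmod (P N phi (Rdiv (INR k) (INR (Nat.sub (Nat.mul 2 N) 1)))) = Cmod (P N psi (Rdiv (INR k) (INR (Nat.sub (Nat.mul 2 N) 1))))
     /\ Cmod (Pderiv N phi (Rdiv (INR k) (INR (Nat.sub (Nat.mul 2 N) 1))))
        = Cmod (Pderiv N psi (Rdiv (INR k) (INR (Nat.sub (Nat.mul 2 N) 1))))) ->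
  exists lambda : C, Cmod lambda = 1 /\ forall j : nat, (j < N)%coq_nat -> psi j = Cmult lambda (phi j).
Proof.
move=> hN H.
pose a := fun j => c2F (phi j); pose b := fun j => c2F (psi j).
have hM : (0 < Nat.sub (Nat.mul 2 N) 1)%N by apply/ltP; lia.
have hsz : forall (u : nat -> F), (size (pol N u * rvp N u)%R <= Nat.sub (Nat.mul 2 N) 1)%N.
  move=> u; apply: leq_trans (size_polyMleq _ _) _.
  have := size_poly N u; have := size_poly N (fun j => (u (N.-1 - j)%N)^*)%R.
  rewrite -/(pol N u) -/(rvp N u) => h1 h2.
  apply: (@leq_trans (N + N).-1); first by rewrite -!subn1 leq_sub2r // leq_add.
  apply/leP; lia.
have hS : (pol N a * rvp N a = pol N b * rvp N b)%R.
  apply: eq_by_pts hM (hsz _) (hsz _) _ => k hk.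
  have hk' : (k <= Nat.sub (Nat.mul 2 N) 2)%coq_nat by move/ltP: hk; lia.
  have e := Cmod_c2F _ _ (proj1 (H k hk')).
  rewrite /P P_horner P_horner in e.
  rewrite !hornerM !rvp_horner ?zeta_norm //.
  rewrite mulrCA /pol e mulrCA //.
have hT : (pol N (wt a) * rvp N (wt a) = pol N (wt b) * rvp N (wt b))%R.
  apply: eq_by_pts hM (hsz _) (hsz _) _ => k hk.
  have hk' : (k <= Nat.sub (Nat.mul 2 N) 2)%coq_nat by move/ltP: hk; lia.
  have e := Cmod_c2F _ _ (proj2 (H k hk')).
  rewrite !Pderiv_dPsum !dP_horner !rmorphM in e.
  rewrite !hornerM !rvp_horner ?zeta_norm //.
  rewrite mulrCA [RHS]mulrCA; congr (_ * _)%R.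
  have hw : ((0 +i* (2 * PI))%C * (0 +i* (2 * PI))%C^* != 0 :> F)%R.
    by rewrite mulf_neq0 ?conjC_eq0 ?w_neq0.
  apply: (mulfI hw).
  move: e; rewrite /pol /wt.
  set A := (_ .[zeta _])%R; set B := (_ .[zeta _])%R.
  move=> e; rewrite mulrACA e; rewrite mulrACA //.
have hN' : (0 < N)%N by apply/ltP; lia.
have [c [hc1 hc]] := @alg _ N a b hN' hS hT.
exists (complex.Re c, complex.Im c); split.
  have hn := c2F_norm (complex.Re c, complex.Im c).
  have hcc := c2F_surj c.
  rewrite hcc hc1 in hn.
  move: hn => /(congr1 (@complex.Re _)) /= hn.
  rewrite /Cmod; change (sqrt (Rplus (pow (complex.Re c) 2) (pow (complex.Im c) 2)) = 1).
  rewrite !RpowE RplusE -hn; exact: sqrt_1.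
move=> j hj; apply: c2F_inj; rewrite c2F_mul.
have hcc := c2F_surj c.
rewrite hcc; apply: hc; exact/ltP.
Qed.
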